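(* On the trivial homogeneous $\mathrm{U}(1)$-principal bundle $P=V^{5,2}\times\mathrm{U}(1)$ over $V^{5,2}=\mathrm{SO}(5)/\mathrm{SO}(3)$ (induced by the trivial homomorphism $\mathrm{SO}(3)\to\mathrm{U}(1)$), the $\mathrm{SO}(5)$-invariant connections are exactly those corresponding to the linear maps $\beta:\mathfrak{so}(5)\to\mathfrak u(1)$ of the form $\beta=a_1\,e^1\otimes u$, $a_1\in\mathbb{R}$, where $u$ is a fixed generator of $\mathfrak u(1)\cong\mathbb{R}$. Furthermore, the curvature of such a connection lies in $\Omega^2_1$, i.e. is a constant multiple of the invariant 2-form $\omega$ corresponding to $e^{25}+e^{36}+e^{47}$, tensored with $u$.
   Context: Basis of $\mathfrak{so}(5)$ (with $E_{ij}$ the elementary $5\times5$ matrices): $e_1=E_{12}-E_{21}$, $e_2=E_{13}-E_{31}$, $e_3=E_{14}-E_{41}$, $e_4=E_{15}-E_{51}$, $e_5=E_{23}-E_{32}$, $e_6=E_{24}-E_{42}$, $e_7=E_{25}-E_{52}$, $e_8=E_{34}-E_{43}$, $e_9=E_{35}-E_{53}$, $e_{10}=E_{54}-E_{45}$; bracket = commutator. $\mathrm{SO}(3)\subset\mathrm{SO}(5)$ has Lie algebra $\mathrm{span}\{e_8,e_9,e_{10}\}$; $e^i$ dual basis. For a homomorphism $\phi:H\to K$, $G$-invariant connections on $G\times_\phi K\to G/H$ correspond bijectively to linear maps $\alpha:\mathfrak g\to\mathfrak k$ with $\alpha|_{\mathfrak h}=\phi_*$ and $\alpha\circ\mathrm{Ad}(h)=\mathrm{Ad}(\phi(h))\circ\alpha$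 for $h\in H$. The curvature is the invariant form given on $\mathfrak m=\mathrm{span}\{e_1,\dots,e_7\}$ by $F(X,Y)=[\alpha X,\alpha Y]-\alpha([X,Y])$. $\Omega^2_1$ denotes 2-forms $f\,\omega$ with $\omega=e^{25}+e^{36}+e^{47}$. *)

(* Defs.v *)
(* so(5) is modelled as the skew-symmetric 5x5 matrices over a
   real field R (R = the reals being the intended instance); u(1) ~ R. *)
From HB Require Import structures.
From mathcomp Require Import all_boot all_order all_algebra.
Set Implicit Arguments. Unset Strict Implicit. Unset Printing Implicit Defensive.
Import Order.TTheory GRing.Theory Num.Theory.
Local Open Scope ring_scope.

Section SO5.
Variable R : realFieldType.

Definition skew5 (X : 'M[R]_5) : Prop := X^T = - X.

Definition br5 (X Y : 'M[R]_5) : 'M[R]_5 := X *m Y - Y *m X.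

Definition i0 : 'I_5 := @Ordinal 5 0 isT.
Definition i1 : 'I_5 := @Ordinal 5 1 isT.
Definition i2 : 'I_5 := @Ordinal 5 2 isT.
Definition i3 : 'I_5 := @Ordinal 5 3 isT.
Definition i4 : 'I_5 := @Ordinal 5 4 isT.

Definition Ek (i j : 'I_5) : 'M[R]_5 := delta_mx i j - delta_mx j i.

(* basis e_1, ..., e_10 (indexed 1..10; index 0 unused, mapped to 0) *)
Definition ebasis (k : nat) : 'M[R]_5 :=
  match k with
  | 1 => Ek i0 i1 | 2 => Ek i0 i2 | 3 => Ek i0 i3 | 4 => Ek i0 i4
  | 5 => Ek i1 i2 | 6 => Ek i1 i3 | 7 => Ek i1 i4
  | 8 => Ek i2 i3 | 9 => Ek i2 i4 | 10 => Ek i4 i3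
  | _ => 0
  end.

(* dual basis e^1, ..., e^10 evaluated on X in so(5): the coordinates of X *)
Definition edual (k : nat) (X : 'M[R]_5) : R :=
  match k with
  | 1 => X i0 i1 | 2 => X i0 i2 | 3 => X i0 i3 | 4 => X i0 i4
  | 5 => X i1 i2 | 6 => X i1 i3 | 7 => X i1 i4
  | 8 => X i2 i3 | 9 => X i2 i4 | 10 => X i4 i3
  | _ => 0
  end.

(* h = so(3) = span{e8,e9,e10};  m = span{e1,...,e7} *)
Definition in_h (X : 'M[R]_5) : Prop :=
  skew5 X /\ forall k, (1 <= k <= 7)%N -> edual k X = 0.
Definition in_m (X : 'M[R]_5) : Prop :=
  skew5 X /\ forall k, (8 <= k <= 10)%N -> edual k X = 0.

Definition inSO3 (g : 'M[R]_3) : Prop := g^T *m g = 1%:M /\ \det g = 1.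
Definition embSO3 (g : 'M[R]_3) : 'M[R]_5 := @block_mx R 2 3 2 3 1%:M 0 0 g.

Definition Ad5 (h X : 'M[R]_5) : 'M[R]_5 := h *m X *m invmx h.

Definition linear_on_so5 (alpha : 'M[R]_5 -> R) : Prop :=
  forall (a : R) X Y, skew5 X -> skew5 Y ->
    alpha (a *: X + Y) = a * alpha X + alpha Y.

(* Wang's condition for phi : SO(3) -> U(1) trivial: phi_* = 0 and
   alpha o Ad(h) = Ad(phi h) o alpha = alpha (Ad of the identity of U(1)). *)
Definition inv_conn_trivial (alpha : 'M[R]_5 -> R) : Prop :=
  linear_on_so5 alpha /\
  (forall X, in_h X -> alpha X = 0) /\
  (forall g X, inSO3 g -> skew5 X -> alpha (Ad5 (embSO3 g) X) = alpha X).

(* curvature F(X,Y) = [alpha X, alpha Y]_{u(1)} - alpha([X,Y]);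
   the bracket of u(1) (as a subalgebra of gl(1)) is the commutator *)
Definition curv (alpha : 'M[R]_5 -> R) (X Y : 'M[R]_5) : R :=
  (alpha X * alpha Y - alpha Y * alpha X) - alpha (br5 X Y).

Definition wedge (i j : nat) (X Y : 'M[R]_5) : R :=
  edual i X * edual j Y - edual j X * edual i Y.
Definition omega (X Y : 'M[R]_5) : R := wedge 2 5 X Y + wedge 3 6 X Y + wedge 4 7 X Y.

End SO5.

(* Main.v *)
Require Import Defs.
From HB Require Import structures.
From mathcomp Require Import all_boot all_order all_algebra.
From mathcomp Require Import ring lra.
Set Implicit Arguments. Unset Strict Implicit. Unset Printing Implicit Defensive.
Import Order.TTheory GRing.Theory Num.Theory.
Local Open Scope ring_scope.

Section H.
Variable R : realFieldType.

Lemma bEul (g : 'M[R]_3) (a : 'I__) (b : 'I__) : embSO3 g (@lshift 2 3 a) (@lshift 2 3 b) = (1%:M : 'M[R]_2) a b.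
Proof. exact: block_mxEul. Qed.
Lemma bEur (g : 'M[R]_3) (a : 'I__) (b : 'I__) : embSO3 g (@lshift 2 3 a) (@rshift 2 3 b) = 0.
Proof. by rewrite /embSO3 [LHS]block_mxEur mxE. Qed.
Lemma bEdl (g : 'M[R]_3) (a : 'I__) (b : 'I__) : embSO3 g (@rshift 2 3 a) (@lshift 2 3 b) = 0.
Proof. by rewrite /embSO3 [LHS]block_mxEdl mxE. Qed.
Lemma bEdr (g : 'M[R]_3) (a : 'I__) (b : 'I__) : embSO3 g (@rshift 2 3 a) (@rshift 2 3 b) = g a b.
Proof. exact: block_mxEdr. Qed.

Lemma emb_l (g : 'M[R]_3) (a : 'I_2) k :
  embSO3 g (lshift 3 a) k = (lshift 3 a == k)%:R.
Proof.
case: (@split_ordP 2 3 k) => k' ->.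
  by rewrite bEul mxE; case: a => [[|[|]] //] ?; case: k' => [[|[|[|]]] //] ?.
by rewrite bEur; case: a => [[|[|]] //] ?; case: k' => [[|[|[|]]] //] ?.
Qed.

Lemma emb_r (g : 'M[R]_3) (a : 'I_2) k :
  embSO3 g k (lshift 3 a) = (k == lshift 3 a)%:R.
Proof.
case: (@split_ordP 2 3 k) => k' ->.
  by rewrite bEul mxE; case: a => [[|[|]] //] ?; case: k' => [[|[|[|]]] //] ?.
by rewrite bEdl; case: a => [[|[|]] //] ?; case: k' => [[|[|[|]]] //] ?.
Qed.

Lemma embM_l (g : 'M[R]_3) (A : 'M[R]_5) (a : 'I_2) j :
  (embSO3 g *m A) (lshift 3 a) j = A (lshift 3 a) j.
Proof.
rewrite mxE (bigD1 (lshift 3 a)) //= emb_l eqxx mul1r big1 ?addr0 // => k.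
by rewrite emb_l eq_sym => /negPf ->; rewrite mul0r.
Qed.

Lemma embM_r (g : 'M[R]_3) (A : 'M[R]_5) (a : 'I_2) i :
  (A *m embSO3 g) i (lshift 3 a) = A i (lshift 3 a).
Proof.
rewrite mxE (bigD1 (lshift 3 a)) //= emb_r eqxx mulr1 big1 ?addr0 // => k.
by rewrite emb_r => /negPf ->; rewrite mulr0.
Qed.

Lemma emb_inv (g : 'M[R]_3) : inSO3 g -> invmx (embSO3 g) = embSO3 g^T.
Proof.
case=> gg _.
have H : embSO3 g *m embSO3 g^T = 1%:M.
  rewrite /embSO3 (@mulmx_block _ 2 3 2 3 2 3 1%:M 0 0 g 1%:M 0 0 g^T) !mulmx0 !mul0mx !mulmx1 !addr0 !add0r.
  by rewrite (mulmx1C gg) -scalar_mx_block.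
have [U _] := mulmx1_unit H.
by rewrite -[RHS](mulKmx U) H mulmx1.
Qed.

Definition i0E : i0 = lshift 3 (@Ordinal 2 0 isT) :> 'I_(2+3). Proof. exact: val_inj. Qed.
Definition i1E : i1 = lshift 3 (@Ordinal 2 1 isT) :> 'I_(2+3). Proof. exact: val_inj. Qed.

Lemma Ad_01 (g : 'M[R]_3) (X : 'M[R]_5) : inSO3 g -> Ad5 (embSO3 g) X i0 i1 = X i0 i1.
Proof.
move=> Hg; rewrite /Ad5 emb_inv // i0E i1E embM_r embM_l //.
Qed.


Lemma ord5 (i : 'I_5) : i = i0 \/ i = i1 \/ i = i2 \/ i = i3 \/ i = i4.
Proof.
case: i => [[|[|[|[|[|]]]]] //] H.
- by left; apply: val_inj.
- by right; left; apply: val_inj.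
- by right; right; left; apply: val_inj.
- by right; right; right; left; apply: val_inj.
- by right; right; right; right; apply: val_inj.
Qed.

Lemma sum5 (F : 'I_5 -> R) : \sum_k F k = F i0 + F i1 + F i2 + F i3 + F i4.
Proof.
rewrite (bigD1 i0) //= (bigD1 i1) //= (bigD1 i2) //= (bigD1 i3) //= (bigD1 i4) //=.
rewrite big1 ?addr0 ?addrA // => k; by case: (ord5 k) => [|[|[|[|]]]] ->.
Qed.

Lemma skew_entry (X : 'M[R]_5) : skew5 X -> forall i j, X j i = - X i j.
Proof. rewrite /skew5 => H i j; by have := congr1 (fun M : 'M[R]_5 => M i j) H; rewrite !mxE. Qed.

Lemma skew_diag (X : 'M[R]_5) : skew5 X -> forall i, X i i = 0.
Proof. move=> H i; have := skew_entry H i i; lra. Qed.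

Lemma skewD (X Y : 'M[R]_5) : skew5 X -> skew5 Y -> skew5 (X + Y).
Proof. by rewrite /skew5 => hx hy; rewrite linearD /= hx hy opprD. Qed.
Lemma skewZ a (X : 'M[R]_5) : skew5 X -> skew5 (a *: X).
Proof. by rewrite /skew5 => hx; rewrite linearZ /= hx scalerN. Qed.
Lemma skewEk (i j : 'I_5) : skew5 (Ek R i j).
Proof. by rewrite /skew5 /Ek linearB /= !trmx_delta opprB. Qed.
Lemma skew0 : skew5 (0 : 'M[R]_5).
Proof. by rewrite /skew5 trmx0 oppr0. Qed.

Local Notation E := (Ek R).
Lemma decomp (X : 'M[R]_5) : skew5 X ->
  X = X i0 i1 *: E i0 i1 + (X i0 i2 *: E i0 i2 + (X i0 i3 *: E i0 i3 +
      (X i0 i4 *: E i0 i4 + (X i1 i2 *: E i1 i2 + (X i1 i3 *: E i1 i3 +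
      (X i1 i4 *: E i1 i4 + (X i2 i3 *: E i2 i3 + (X i2 i4 *: E i2 i4 +
       X i4 i3 *: E i4 i3)))))))).
Proof.
move=> H; have sk := skew_entry H; have sd := skew_diag H.
apply/matrixP => i j; rewrite !mxE.
case: (ord5 i) => [|[|[|[|]]]] ->; case: (ord5 j) => [|[|[|[|]]]] -> /=;
  rewrite ?sd ?(sk i0 i1) ?(sk i0 i2) ?(sk i0 i3) ?(sk i0 i4) ?(sk i1 i2) ?(sk i1 i3) ?(sk i1 i4) ?(sk i2 i3) ?(sk i2 i4) ?(sk i4 i3);
  rewrite ?mulr0n ?mulr1n ?subr0 ?sub0r; lra.
Qed.


Lemma embT (g : 'M[R]_3) : (embSO3 g)^T = embSO3 g^T.
Proof. by rewrite /embSO3 (@tr_block_mx _ 2 3 2 3) trmx1 !trmx0. Qed.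

Lemma skewAd (g : 'M[R]_3) X : inSO3 g -> skew5 X -> skew5 (Ad5 (embSO3 g) X).
Proof.
move=> Hg hX; rewrite /skew5 /Ad5 emb_inv // !trmx_mul !embT trmxK hX.
by rewrite mulNmx mulmxN mulmxA.
Qed.

Lemma emb_diag (d : 'rV[R]_3) :
  embSO3 (diag_mx d) = diag_mx (row_mx (const_mx 1 : 'rV[R]_2) d).
Proof. by rewrite /embSO3 (@diag_mx_row _ 3 2) diag_const_mx. Qed.

Lemma diag_SO3 (d : 'rV[R]_3) : (forall j, d 0 j * d 0 j = 1) ->
  \prod_j d 0 j = 1 -> inSO3 (diag_mx d).
Proof.
move=> H1 H2; split; last by rewrite det_diag.
rewrite tr_diag_mx mul_diag_mx; apply/matrixP => i j; rewrite !mxE.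
by rewrite mulrnAr H1.
Qed.

Lemma diagEk (D : 'rV[R]_5) a b :
  diag_mx D *m E a b *m diag_mx D = (D 0 a * D 0 b) *: E a b.
Proof.
rewrite mul_diag_mx mul_mx_diag; apply/matrixP => i j; rewrite !mxE.
case: (eqVneq i a) => ia; case: (eqVneq j b) => jb;
case: (eqVneq i b) => ib; case: (eqVneq j a) => ja /=; subst;
rewrite ?mulr0n ?mulr1n ?subr0 ?sub0r ?mulr0 ?mul0r ?mulr1 ?mul1r ?subrr //; ring.
Qed.

Section Alpha.
Variable alpha : 'M[R]_5 -> R.
Hypothesis hlin : linear_on_so5 alpha.

Lemma alpha0 : alpha 0 = 0.
Proof. have := hlin 1 skew0 skew0; rewrite scale1r addr0 mul1r; lra. Qed.
Lemma alphaZ a X : skew5 X -> alpha (a *: X) = a * alpha X.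
Proof. by move=> h; have := hlin a h skew0; rewrite !addr0 alpha0 addr0. Qed.

Lemma alpha_decomp X : skew5 X ->
  alpha X = X i0 i1 * alpha (E i0 i1) + X i0 i2 * alpha (E i0 i2) + X i0 i3 * alpha (E i0 i3)
   + X i0 i4 * alpha (E i0 i4) + X i1 i2 * alpha (E i1 i2) + X i1 i3 * alpha (E i1 i3)
   + X i1 i4 * alpha (E i1 i4) + X i2 i3 * alpha (E i2 i3) + X i2 i4 * alpha (E i2 i4)
   + X i4 i3 * alpha (E i4 i3).
Proof.
move=> h; rewrite {1}(decomp h).
have aS : forall a i j Y, skew5 Y -> alpha (a *: E i j + Y) = a * alpha (E i j) + alpha Y.
  by move=> a i j Y hY; rewrite hlin //; exact: skewEk.
rewrite !aS ?alphaZ ?addrA //; try exact: skewEk;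
  repeat (exact: skewEk || apply: skewZ || apply: skewD).
Qed.

End Alpha.

Lemma skew_br (X Y : 'M[R]_5) : skew5 X -> skew5 Y -> skew5 (br5 X Y).
Proof.
rewrite /skew5 /br5 => hX hY; rewrite linearB /= !trmx_mul hX hY.
by rewrite !mulmxN !mulNmx !opprK opprB.
Qed.

Definition i2E : i2 = rshift 2 (@Ordinal 3 0 isT) :> 'I_(2+3). Proof. exact: val_inj. Qed.
Definition i3E : i3 = rshift 2 (@Ordinal 3 1 isT) :> 'I_(2+3). Proof. exact: val_inj. Qed.
Definition i4E : i4 = rshift 2 (@Ordinal 3 2 isT) :> 'I_(2+3). Proof. exact: val_inj. Qed.

Lemma rEl (d : 'rV[R]_3) (a : 'I_2) : (row_mx (const_mx 1 : 'rV[R]_2) d) 0 (@lshift 2 3 a) = 1.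
Proof. by rewrite [LHS]row_mxEl mxE. Qed.
Lemma rEr (d : 'rV[R]_3) (a : 'I_3) : (row_mx (const_mx 1 : 'rV[R]_2) d) 0 (@rshift 2 3 a) = d 0 a.
Proof. exact: row_mxEr. Qed.

Lemma inhE (i j : 'I_5) : (i == i2) || (i == i3) || (i == i4) ->
  (j == i2) || (j == i3) || (j == i4) -> in_h (E i j).
Proof.
move=> hi hj; split; first exact: skewEk.
move=> k /andP[k1 k7].
case: k k1 k7 => [|[|[|[|[|[|[|[|k]]]]]]]] // _ _; rewrite /edual !mxE.
all: by case/orP: hi => [/orP[]|] /eqP->; case/orP: hj => [/orP[]|] /eqP->; rewrite /= subrr.
Qed.

End H.

Unset Implicit Arguments.
Set Strict Implicit.

Theorem lemma4p5 (R : realFieldType) (u : R) (hu : u != 0)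
    (alpha : 'M[R]_5 -> R) (hlin : linear_on_so5 alpha) :
  (inv_conn_trivial alpha <->
     exists a1 : R, forall X, skew5 X -> alpha X = a1 * edual 1 X * u) /\
  (inv_conn_trivial alpha ->
     exists c : R, forall X Y, in_m X -> in_m Y ->
       curv alpha X Y = c * omega X Y * u).
Proof.
have fwd : inv_conn_trivial alpha ->
     exists a1 : R, forall X, skew5 X -> alpha X = a1 * edual 1 X * u.
  case=> _ [hh hinv].
  have kill : forall (d : 'rV[R]_3) (a b : 'I_5), (forall j, d 0 j * d 0 j = 1) ->
      \prod_j d 0 j = 1 ->
      (row_mx (const_mx 1 : 'rV[R]_2) d) 0 a * (row_mx (const_mx 1 : 'rV[R]_2) d) 0 b = -1 ->
      alpha (Ek R a b) = 0.
    move=> d a b h1 h2 hab.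
    have hg := diag_SO3 h1 h2.
    have := hinv _ (Ek R a b) hg (@skewEk R a b).
    rewrite /Ad5 emb_inv // tr_diag_mx emb_diag diagEk hab alphaZ //; last exact: skewEk.
    lra.
  pose dA : 'rV[R]_3 := \row_(j < 3) (if (j : nat) == 2%N then 1 else -1).
  pose dB : 'rV[R]_3 := \row_(j < 3) (if (j : nat) == 0%N then 1 else -1).
  have hA1 : forall j, dA 0 j * dA 0 j = 1.
    by move=> j; rewrite mxE; case: ifP => _; lra.
  have hB1 : forall j, dB 0 j * dB 0 j = 1.
    by move=> j; rewrite mxE; case: ifP => _; lra.
  have hA2 : \prod_j dA 0 j = 1.
    by rewrite !big_ord_recr big_ord0 /= !mxE /=; lra.
  have hB2 : \prod_j dB 0 j = 1.
    by rewrite !big_ord_recr big_ord0 /= !mxE /=; lra.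
  have z2 : alpha (Ek R i0 i2) = 0.
    by apply: (kill dA _ _ hA1 hA2); rewrite i0E i2E rEl rEr mxE /=; lra.
  have z3 : alpha (Ek R i0 i3) = 0.
    by apply: (kill dA _ _ hA1 hA2); rewrite i0E i3E rEl rEr mxE /=; lra.
  have z4 : alpha (Ek R i0 i4) = 0.
    by apply: (kill dB _ _ hB1 hB2); rewrite i0E i4E rEl rEr mxE /=; lra.
  have z5 : alpha (Ek R i1 i2) = 0.
    by apply: (kill dA _ _ hA1 hA2); rewrite i1E i2E rEl rEr mxE /=; lra.
  have z6 : alpha (Ek R i1 i3) = 0.
    by apply: (kill dA _ _ hA1 hA2); rewrite i1E i3E rEl rEr mxE /=; lra.
  have z7 : alpha (Ek R i1 i4) = 0.
    by apply: (kill dB _ _ hB1 hB2); rewrite i1E i4E rEl rEr mxE /=; lra.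
  have z8 : alpha (Ek R i2 i3) = 0 by apply: hh; apply: inhE.
  have z9 : alpha (Ek R i2 i4) = 0 by apply: hh; apply: inhE.
  have z10 : alpha (Ek R i4 i3) = 0 by apply: hh; apply: inhE.
  exists (alpha (Ek R i0 i1) / u) => X hX.
  rewrite (alpha_decomp hlin hX) z2 z3 z4 z5 z6 z7 z8 z9 z10 /edual.
  by field.
split.
  split; first exact: fwd.
  case=> a1 Ha; split; first exact: hlin.
  split.
    move=> X [hs hk]; rewrite Ha // (hk 1%N isT); ring.
  move=> g X hg hX; rewrite !Ha //; last exact: skewAd. by congr (_ * _ * _); exact: Ad_01.
move=> hinv; have [a1 Ha] := fwd hinv; exists a1.
move=> X Y [hX _] [hY _].
have sX := skew_entry hX; have sY := skew_entry hY.
have dX := skew_diag hX; have dY := skew_diag hY.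
rewrite /curv !Ha //; last exact: skew_br. rewrite /omega /wedge /edual /= /br5 !mxE !sum5.
rewrite (sX i1 i2) (sX i1 i3) (sX i1 i4) (sY i1 i2) (sY i1 i3) (sY i1 i4) !dX !dY.
ring.
Qed.
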